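(* Let $G=(V,E)$ be a simple 2-vertex-connected graph and let $e=uv\in E$ be an irrelevant edge of $G$. Then there exists a minimum-size 2-edge-connected spanning subgraph of $G$ not containing $e$.
   Context: A $k$-vertex-cut of $G$ is a set of $k$ nodes whose removal leaves a graph with at least two connected components; $G$ is 2-vertex-connected (2VC) if it has at least 3 nodes, is connected, and has no 1-vertex-cut. An edge $uv\in E$ is irrelevant if $\{u,v\}$ is a 2-vertex-cut of $G$. A graph is 2-edge-connected (2EC) if it is connected and remains connected after removing any single edge; a spanning subgraph is a subgraph on all nodes of $V$, identified with its edge set. *)

(* Defs.v *)
From mathcomp Require Import all_boot.
Set Implicit Arguments. Unset Strict Implicit. Unset Printing Implicit Defensive.

Section Graphs.
Variable T : finType.

Definition simple_graph (adj : rel T) : Prop := symmetric adj /\ irreflexive adj.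

Definition edges (adj : rel T) : {set {set T}} :=
  [set [set x; y] | x in T, y in T & adj x y].

Definition adj_minus (adj : rel T) (S : {set T}) : rel T :=
  fun x y => [&& adj x y, x \notin S & y \notin S].

Definition connected_graph (adj : rel T) : Prop := forall x y : T, connect adj x y.

Definition disconnects (adj : rel T) (S : {set T}) : Prop :=
  exists x y : T, [/\ x \notin S, y \notin S & ~~ connect (adj_minus adj S) x y].

Definition vertex_cut (adj : rel T) (k : nat) (S : {set T}) : Prop :=
  #|S| = k /\ disconnects adj S.

Definition two_vertex_connected (adj : rel T) : Prop :=
  [/\ 3 <= #|T|, connected_graph adj & forall S, ~ vertex_cut adj 1 S].

Definition irrelevant_edge (adj : rel T) (u v : T) : Prop :=
  adj u v /\ vertex_cut adj 2 [set u; v].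

Definition edge_rel (F : {set {set T}}) : rel T :=
  fun x y => [set x; y] \in F.

Definition two_edge_connected_set (F : {set {set T}}) : Prop :=
  connected_graph (edge_rel F) /\
  forall f, f \in F -> connected_graph (edge_rel (F :\ f)).

(* spanning 2EC subgraph of G (identified with its edge set) *)
Definition two_ecss (adj : rel T) (F : {set {set T}}) : Prop :=
  F \subset edges adj /\ two_edge_connected_set F.

Definition min_two_ecss (adj : rel T) (F : {set {set T}}) : Prop :=
  two_ecss adj F /\ forall F', two_ecss adj F' -> #|F| <= #|F'|.

End Graphs.

(* Main.v *)
Require Import Defs.
From mathcomp Require Import all_boot zify.
From Stdlib Require Import Classical.
Set Implicit Arguments. Unset Strict Implicit. Unset Printing Implicit Defensive.

Section Gen.
Variable T : finType.

Lemma closureP (e : rel T) (Q : pred T) :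
  (forall x y, Q x -> e x y -> Q y) -> forall x y, connect e x y -> Q x -> Q y.
Proof.
move=> H x y /connectP [p]; elim: p x => [|z p IH] x /=; first by move=> _ ->.
move=> /andP[exz pz] ly Qx; exact: IH z pz ly (H _ _ Qx exz).
Qed.

Lemma exitP (e : rel T) (P : pred T) x y : connect e x y -> P x -> ~~ P y ->
  exists p q, [/\ P p, ~~ P q & e p q].
Proof.
move=> cxy Px nPy.
case: (boolP [exists p, exists q, [&& P p, ~~ P q & e p q]]).
  by move=> /existsP[p /existsP[q /and3P[? ? ?]]]; exists p, q.
move=> /existsPn H; exfalso; move: nPy; apply/negP/negPn.
apply: (closureP _ cxy Px) => a b Pa eab.
move: (H a) => /existsPn /(_ b); rewrite Pa eab /= andbT; exact: negbNE.
Qed.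

Lemma set2_eq (x y p q : T) : [set x; y] = [set p; q] ->
  (x = p /\ y = q) \/ (x = q /\ y = p).
Proof.
move=> E.
have hx : x \in [set p; q] by rewrite -E !inE eqxx.
have hy : y \in [set p; q] by rewrite -E !inE eqxx orbT.
have hp : p \in [set x; y] by rewrite E !inE eqxx.
have hq : q \in [set x; y] by rewrite E !inE eqxx orbT.
move: hx hy hp hq; rewrite !inE.
case/orP=>/eqP->; case/orP=>/eqP->; move=> A B; auto;
  move: A B; rewrite ?eqxx ?orbF ?orbb ?orbT.
all: try (by move=> /eqP-> _; auto).
all: try (by move=> _ /eqP->; auto).
all: try (by move=> /eqP-> /eqP->; auto).
Qed.

Lemma edge_rel_sym (F : {set {set T}}) : symmetric (edge_rel F).
Proof. by move=> x y; rewrite /edge_rel setUC. Qed.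

Definition restr (D : {set T}) (r : rel T) : rel T :=
  fun x y => [&& r x y, x \in D & y \in D].

Lemma restr_sym D r : symmetric r -> symmetric (restr D r).
Proof. by move=> sr x y; rewrite /restr sr (andbC (x \in D)). Qed.

Lemma connect_symm (r : rel T) : symmetric r -> forall x y, connect r x y -> connect r y x.
Proof. by move=> sr x y; rewrite (sym_connect_sym sr). Qed.

Lemma conn_of_root (F : {set {set T}}) y0 :
  (forall z, connect (edge_rel F) z y0) -> connected_graph (edge_rel F).
Proof.
move=> H x y; apply: connect_trans (H x) _.
by apply: connect_symm; [exact: edge_rel_sym| exact: H].
Qed.

End Gen.

Section Gen2.
Variable T : finType.
Lemma connect_mono (e e' : rel T) : (forall x y, e x y -> e' x y) ->
  forall x y, connect e x y -> connect e' x y.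
Proof.
move=> H x y cxy; apply: (closureP (Q := connect e' x)) cxy _ => //.
by move=> a b ca eab; apply: connect_trans ca (connect1 (H _ _ eab)).
Qed.

Lemma exists_out (p q : T) : 3 <= #|T| -> exists w, (w != p) && (w != q).
Proof.
move=> h; have : 0 < #|~: [set p; q]|.
  by move: (cardsC [set p; q]) (leq_b1 (p != q)); rewrite cards2; lia.
by case/card_gt0P => w; rewrite !inE negb_or; exists w.
Qed.
End Gen2.
Section G.
Variable T : finType.
Variable adj : rel T.
Hypothesis sym : symmetric adj.
Hypothesis irr : irreflexive adj.

Lemma edges_inv f : f \in edges adj -> exists p q, adj p q /\ f = [set p; q].
Proof. by case/imset2P => p q _; rewrite inE => pq ->; exists p, q. Qed.

Lemma edgesI p q : adj p q -> [set p; q] \in edges adj.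
Proof. by move=> pq; apply/imset2P; exists p q; rewrite ?inE. Qed.

Lemma edge_adj (F : {set {set T}}) p q : F \subset edges adj -> edge_rel F p q -> adj p q.
Proof.
move=> /subsetP sF /sF /edges_inv [x [y [xy /set2_eq [[-> ->]|[-> ->]]]]] //.
by rewrite sym.
Qed.

Lemma no1cut : two_vertex_connected adj -> forall x z w, z != x -> w != x ->
  connect (adj_minus adj [set x]) z w.
Proof.
case=> _ _ H x z w zx wx; case: (boolP (connect _ z w)) => // nc; exfalso.
by apply: (H [set x]); split; [exact: cards1 | exists z, w; rewrite !inE].
Qed.

Lemma minus_edge p q z w : adj p q -> adj_minus adj [set p] z w ->
  edge_rel (edges adj :\ [set p; q]) z w.
Proof.
move=> pq /and3P[zw]; rewrite !inE => zp wp; rewrite /edge_rel !inE edgesI // andbT.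
by apply/eqP => /set2_eq [[/eqP]|[_ /eqP]]; rewrite ?(negbTE zp) ?(negbTE wp).
Qed.

Lemma G2EC : two_vertex_connected adj -> two_ecss adj (edges adj).
Proof.
move=> h2; split => //; split.
  move=> x y; case: h2 => _ /(_ x y) c _; apply: connect_mono c.
  by move=> a b ab; rewrite /edge_rel edgesI.
move=> f /edges_inv [p [q [pq ->]]].
have pnq : q != p by apply/eqP => E; move: (irr p); rewrite -{2}E pq.
apply: (@conn_of_root _ _ q) => z.
have L1 : forall z, z != p -> connect (edge_rel (edges adj :\ [set p; q])) z q.
  move=> z0 z0p; apply: connect_mono (no1cut h2 z0p pnq); move=> a b; exact: minus_edge pq.
have [->|zp] := eqVneq z p; last exact: L1.
case: (h2) => h3 _ _; case: (exists_out p q h3) => w /andP[wp wq].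
apply: connect_trans (L1 _ wp).
apply: connect_symm; first exact: edge_rel_sym.
have qp : p != q by rewrite eq_sym.
apply: connect_mono (no1cut h2 wq qp).
by move=> a b; rewrite [[set p; q]]setUC; apply: minus_edge; rewrite sym.
Qed.

End G.

Lemma min_exists (T : finType) (adj : rel T) F0 : two_ecss adj F0 -> exists F, min_two_ecss adj F.
Proof.
have main : forall n (F : {set {set T}}), #|F| <= n -> two_ecss adj F -> exists F, min_two_ecss adj F.
  elim=> [|n IH] F hF tF.
    by exists F; split => // F' _; move: hF; rewrite leqn0 => /eqP ->.
  case: (classic (forall F', two_ecss adj F' -> #|F| <= #|F'|)) => h.
    by exists F.
  case: (not_all_ex_not _ _ h) => F' h'.
  have [tF' nle] := imply_to_and _ _ h'.
  have lt : #|F'| < #|F| by rewrite ltnNge; apply/negP.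
  by apply: (IH F') => //; lia.
exact: (main _ F0 (leqnn _)).
Qed.

Section Main.
Variable T : finType.
Variable adj : rel T.
Hypothesis sym : symmetric adj.
Hypothesis irr : irreflexive adj.
Variables u v : T.
Hypothesis uv : adj u v.
Variable H : {set {set T}}.
Hypothesis hH : two_ecss adj H.
Hypothesis eH : [set u; v] \in H.
Hypothesis minH : forall F', two_ecss adj F' -> #|H| <= #|F'|.

Let e := [set u; v].
Let K := H :\ e.
Let kr := edge_rel K.

Lemma K_conn : connected_graph kr.
Proof. by case: hH => _ [_ /(_ e eH)]. Qed.

Lemma K_sub : K \subset edges adj.
Proof. by case: hH => s _; apply: subset_trans s; apply: subsetDl. Qed.

Lemma kr_adj p q : kr p q -> adj p q.
Proof. move=> h; apply: (@edge_adj _ adj sym K p q K_sub h). Qed.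

Lemma kr_sym : symmetric kr.
Proof. exact: edge_rel_sym. Qed.

Lemma factR (D : {set T}) t :
  (forall p q, adj p q -> p \in D -> q \notin D -> p = u \/ p = v) -> t \notin D ->
  forall w, w \in D -> connect (restr D kr) u w || connect (restr D kr) v w.
Proof.
move=> P4 tD w wD; case: (boolP (_ || _)) => // nr; exfalso.
pose P := fun z => (z \in D) && ~~(connect (restr D kr) u z || connect (restr D kr) v z).
have [p [q [/andP[pD npr] nPq kpq]]] : exists p q, [/\ P p, ~~ P q & kr p q].
  by apply: (exitP (K_conn w t)); rewrite /P ?wD ?nr ?(negbTE tD).
case: (boolP (q \in D)) => qD.
  move: nPq; rewrite /P qD /= negbK => rq; move: npr; apply/negP; apply/negPn.
  have s : restr D kr q p by rewrite /restr kr_sym kpq qD pD.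
  by case/orP: rq => c; rewrite (connect_trans c (connect1 s)) ?orbT.
case: (P4 p q (kr_adj kpq) pD qD) => E; move: npr; rewrite E connect0 ?orbT //.
Qed.


Lemma stepC (D D' : {set T}) :
  (forall p q, adj p q -> p \in D -> q \notin D -> p = u \/ p = v) ->
  (forall z, (z \in D) || (z \in D')) -> u \in D' ->
  ~~ connect (restr D kr) u v ->
  forall z w, z \in D -> connect (restr D kr) u z -> kr z w ->
  (w \in D) && connect (restr D kr) u w || (w \in D') && connect (restr D' kr) u w.
Proof.
move=> P4 P3 uD' nc z w zD cz kzw.
case: (boolP (w \in D)) => wD.
  by rewrite (connect_trans cz (connect1 (_ : restr D kr z w))) // /restr kzw zD wD.
have wD' : w \in D' by move: (P3 w); rewrite (negbTE wD).
case: (P4 z w (kr_adj kzw) zD wD) => E.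
  subst z; apply/orP; right; rewrite wD' /=; apply: connect1.
  by rewrite /restr kzw uD' wD'.
by subst z; move: nc; rewrite cz.
Qed.

Lemma factC (D D' : {set T}) :
  (forall p q, adj p q -> p \in D -> q \notin D -> p = u \/ p = v) ->
  (forall p q, adj p q -> p \in D' -> q \notin D' -> p = u \/ p = v) ->
  (forall z, (z \in D) || (z \in D')) -> u \in D -> u \in D' -> v \in D -> v \in D' ->
  connect (restr D kr) u v || connect (restr D' kr) u v.
Proof.
move=> P4 P4' P3 uD uD' vD vD'.
case: (boolP (connect _ u v)) => //= nc; case: (boolP (connect _ u v)) => //= nc'.
pose Q := fun z => (z \in D) && connect (restr D kr) u z || (z \in D') && connect (restr D' kr) u z.
have : Q v.
  apply: (closureP _ (K_conn u v)); last by rewrite /Q uD connect0.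
  move=> z w /orP[/andP[zD cz]|/andP[zD cz]] kzw.
    exact: stepC P4 P3 uD' nc z w zD cz kzw.
  rewrite /Q orbC; apply: stepC P4' _ uD nc' z w zD cz kzw.
  by move=> y; rewrite orbC.
by rewrite /Q (negbTE nc) (negbTE nc') !andbF.
Qed.

Lemma avoid (D : {set T}) (Ka Kb : {set {set T}}) x p q :
  Ka \subset Kb -> x = [set p; q] -> ~~ ((p \in D) && (q \in D)) ->
  connect (restr D (edge_rel Ka)) u v -> connect (edge_rel (Kb :\ x)) u v.
Proof.
move=> /subsetP sK -> npq; apply: connect_mono => a b /and3P[ab aD bD].
rewrite /edge_rel !inE sK // andbT; apply/eqP => /set2_eq [[Ea Eb]|[Ea Eb]];
  by move: npq; rewrite -Ea -Eb aD bD.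
Qed.

Lemma replace_e (H2 F2 : {set {set T}}) :
  connected_graph (edge_rel H2) -> (forall g, g \in H2 -> g != e -> g \in F2) ->
  connect (edge_rel F2) u v -> connected_graph (edge_rel F2).
Proof.
move=> c sub cuv x y.
apply: (closureP (Q := connect (edge_rel F2) x) _ (c x y)); last exact: connect0.
move=> a b ca hab; apply: connect_trans ca _.
case: (eqVneq [set a; b] e) => E.
  case: (set2_eq E) => [[-> ->]|[-> ->]] //.
  by apply: connect_symm cuv; exact: edge_rel_sym.
by apply: connect1; rewrite /edge_rel sub.
Qed.

Lemma within (D D' : {set T}) :
  (forall z, z \in D -> z \in D' -> z = u \/ z = v) ->
  forall x, x \in K -> exists p q, x = [set p; q] /\
     (~~ ((p \in D) && (q \in D)) \/ ~~ ((p \in D') && (q \in D'))).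
Proof.
move=> P2 x xK; have [p [q [pq E]]] := edges_inv (subsetP K_sub _ xK).
exists p, q; split => //.
case: (boolP ((p \in D) && (q \in D))) => [/andP[pD qD]|]; last by left.
case: (boolP ((p \in D') && (q \in D'))) => [/andP[pD' qD']|]; last by right.
have pnq : p != q by apply/eqP => Epq; move: (irr p); rewrite {2}Epq pq.
exfalso; move: xK; rewrite /K !inE E => /andP[ne _].
case: (P2 p pD pD') => Ep; case: (P2 q qD qD') => Eq; subst p q.
- by rewrite eqxx in pnq.
- by rewrite eqxx in ne.
- by rewrite /e setUC eqxx in ne.
- by rewrite eqxx in pnq.
Qed.


Lemma restr_mono (D : {set T}) (A B : {set {set T}}) : A \subset B ->
  forall x y, connect (restr D (edge_rel A)) x y -> connect (restr D (edge_rel B)) x y.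
Proof.
move=> /subsetP s; apply: connect_mono => a b /and3P[ab aD bD].
by rewrite /restr /edge_rel s ?aD ?bD.
Qed.

Lemma unrestr (D : {set T}) (A : {set {set T}}) x y :
  connect (restr D (edge_rel A)) x y -> connect (edge_rel A) x y.
Proof. by apply: connect_mono => a b /andP[]. Qed.

Lemma HxD x : x \in K -> connected_graph (edge_rel (H :\ x)).
Proof. by case: hH => _ [_ /(_ x)] h; rewrite /K !inE => /andP[_ /h]. Qed.

Lemma caseA (D D' : {set T}) :
  (forall z, z \in D -> z \in D' -> z = u \/ z = v) ->
  connect (restr D kr) u v -> connect (restr D' kr) u v -> False.
Proof.
move=> P2 c c'.
have tK : two_ecss adj K.
  split; first exact: K_sub.
  split; first exact: K_conn.
  move=> x xK; have [p [q [E n]]] := within P2 xK.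
  apply: (replace_e (HxD xK)).
    by move=> g; rewrite /K !inE => /andP[-> ->] ->.
  by case: n => n; [apply: (avoid (subxx K) E n c)| apply: (avoid (subxx K) E n c')].
move: (minH tK) (cardsD1 e H); rewrite eH /K /= => a b.
by move: a; rewrite {1}b add1n ltnn.
Qed.

Definition adje := fun x y => adj x y && ([set x; y] != [set u; v]).

Lemma caseB (D D' : {set T}) t :
  (forall p q, adj p q -> p \in D -> q \notin D -> p = u \/ p = v) -> t \notin D ->
  (forall z, z \in D -> z \in D' -> z = u \/ z = v) ->
  connect (restr D adje) u v ->
  ~~ connect (restr D kr) u v -> connect (restr D' kr) u v ->
  exists F', [/\ two_ecss adj F', #|F'| = #|H| & e \notin F'].
Proof.
move=> P4 tD P2 P6 nc c'.
pose P z := connect (restr D kr) u z.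
have [p [q [Pp nPq hpq]]] : exists p q, [/\ P p, ~~P q & restr D adje p q].
  by apply: (exitP P6); rewrite /P ?connect0.
move: hpq => /and3P[/andP[pq fne] pD qD].
have rq : connect (restr D kr) v q by have := factR P4 tD qD; rewrite (negbTE (nPq : ~~ connect (restr D kr) u q)).
pose f := [set p; q].
have fK : f \notin K.
  apply/negP => fK; move: nPq; rewrite /P (connect_trans Pp (connect1 (_ : restr D kr p q))) //.
  by rewrite /restr /kr /edge_rel fK pD qD.
pose F' := f |: K.
have KF : K \subset F' by apply: subsetUr.
have fF : f \in F' by rewrite !inE eqxx.
have cuvD : connect (restr D (edge_rel F')) u v.
  apply: connect_trans (restr_mono KF Pp) _.
  apply: connect_trans (connect1 (_ : restr D (edge_rel F') p q)) _.
    by rewrite /restr /edge_rel fF pD qD.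
  apply: connect_symm; first by apply: restr_sym; exact: edge_rel_sym.
  by apply: (restr_mono KF).

exists F'; split.
- split.
    apply/subsetP => g; rewrite in_setU1 => /orP[/eqP->|gK]; first exact: edgesI.
    exact: (subsetP K_sub).
  split.
    apply: (replace_e (H2 := H)); first by case: hH => _ [].
      by move=> g gH gne; rewrite !inE gH gne orbT.
    exact: unrestr cuvD.
  move=> x; rewrite {1}/F' in_setU1 => /orP[/eqP ->|xK].
    by rewrite /F' setU1K //; exact: K_conn.
  have [p' [q' [E n]]] := within P2 xK.
  apply: (replace_e (HxD xK)).
    move=> g; rewrite /K /F' !inE => /andP[-> ->] ->; by rewrite orbT.
  case: n => n; first exact: (avoid (subxx F') E n cuvD).
  exact: (avoid KF E n c').
- by rewrite /F' cardsU1 fK (cardsD1 e H) eH /K.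
- by rewrite /F' in_setU1 negb_or eq_sym fne /K in_setD1 eqxx.
Qed.


Lemma replace (D D' : {set T}) t t' :
  (forall p q, adj p q -> p \in D -> q \notin D -> p = u \/ p = v) ->
  (forall p q, adj p q -> p \in D' -> q \notin D' -> p = u \/ p = v) ->
  (forall z, (z \in D) || (z \in D')) -> u \in D -> u \in D' -> v \in D -> v \in D' ->
  (forall z, z \in D -> z \in D' -> z = u \/ z = v) ->
  t \notin D -> t' \notin D' ->
  connect (restr D adje) u v -> connect (restr D' adje) u v ->
  exists F', [/\ two_ecss adj F', #|F'| = #|H| & [set u; v] \notin F'].
Proof.
move=> P4 P4' P3 uD uD' vD vD' P2 tD tD' P6 P6'.
have := factC P4 P4' P3 uD uD' vD vD'.
case: (boolP (connect (restr D kr) u v)) => c1;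
  case: (boolP (connect (restr D' kr) u v)) => c2 //= _.
- by exfalso; exact: caseA P2 c1 c2.
- have P2' : forall z, z \in D' -> z \in D -> z = u \/ z = v by move=> z h h'; exact: P2.
  exact: caseB P4' tD' P2' P6' c2 c1.
- exact: caseB P4 tD P2 P6 c1 c2.
Qed.

End Main.

Section Fin.
Variable T : finType.
Variable adj : rel T.
Hypothesis sym : symmetric adj.
Hypothesis irr : irreflexive adj.
Hypothesis h2 : two_vertex_connected adj.
Variables u v : T.
Hypothesis uv : adj u v.

Let S := [set u; v].
Let G' := adj_minus adj S.
Definition comp (c : T) : {set T} := [set w | connect G' c w].

Lemma comp_in c : c \in comp c.
Proof. by rewrite inE connect0. Qed.

Lemma comp_out c w : c \notin S -> w \in comp c -> w \notin S.
Proof.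
move=> cS; rewrite inE => cw.
by apply: (closureP (Q := fun z => z \notin S)) cw cS => x y _ /and3P[].
Qed.

Lemma comp_step c p q : c \notin S -> p \in comp c -> adj p q -> q \notin S -> q \in comp c.
Proof.
move=> cS pc pq qS; move: (pc); rewrite !inE => cp.
apply: connect_trans cp (connect1 _).
by rewrite /G' /adj_minus pq qS (comp_out cS pc).
Qed.

Lemma adje_sym : symmetric (adje adj u v).
Proof. by move=> x y; rewrite /adje sym setUC. Qed.

Lemma reach_end c (D : {set T}) y y' : c \notin S -> comp c \subset D -> y \in D ->
  [set y; y'] = S -> y != y' -> connect (restr D (adje adj u v)) c y.
Proof.
move=> cS sD yD E yy'.
have inS : forall z, (z \in S) = (z == y) || (z == y') by move=> z; rewrite -E !inE.
have cy' : c != y' by apply/eqP => Ec; move: cS; rewrite inS Ec eqxx orbT.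
have := no1cut h2 cy' yy'.
move=> /(exitP (P := fun z => z \in comp c)) [] //; first by rewrite comp_in.
  by apply/negP => /(comp_out cS); rewrite inS eqxx.
move=> p [q [pc qc /and3P[pq _ qy']]].
have qS : q \in S by apply/negPn/negP => qS; move: qc; rewrite (comp_step cS pc pq qS).
have Eq : q = y.
  move: qS qy'; rewrite inS !inE => /orP[/eqP //|/eqP ->]; by rewrite eqxx.
subst q.
have cp : connect (restr D (adje adj u v)) c p.
  have : (p \in comp c) && connect (restr D (adje adj u v)) c p.
    have cp0 : connect G' c p by move: pc; rewrite inE.
    apply: (closureP (Q := fun z => (z \in comp c) && connect (restr D (adje adj u v)) c z) _ cp0).
      move=> x z /andP[xc cx] xz; move: (xz) => /and3P[az xS zS].
      have zc : z \in comp c by apply: comp_step cS xc az zS.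
      rewrite zc /=; apply: connect_trans cx (connect1 _).
      rewrite /restr /adje az (subsetP sD _ xc) (subsetP sD _ zc) /= andbT.
      by apply/eqP => /set2_eq [[Ex _]|[Ex _]]; move: xS; rewrite !inE Ex eqxx ?orbT.
    by rewrite comp_in connect0.
  by case/andP.
apply: connect_trans cp (connect1 _).
rewrite /restr /adje pq (subsetP sD _ pc) yD /= andbT.
have pS := comp_out cS pc.
apply/eqP => /set2_eq [[Ep _]|[Ep _]]; by move: pS; rewrite !inE Ep eqxx ?orbT.
Qed.

End Fin.


Theorem lemma1 (T : finType) (adj : rel T) (u v : T) :
  simple_graph adj -> two_vertex_connected adj -> irrelevant_edge adj u v ->
  exists F : {set {set T}}, min_two_ecss adj F /\ [set u; v] \notin F.
Proof.
move=> [sym irr] h2 [uv [c2 [a [b [aS bS nab]]]]].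
have [F0 [tF0 minF0]] := min_exists (G2EC sym irr h2).
case: (boolP ([set u; v] \in F0)) => eF; last by exists F0.
have unv : u != v by apply/eqP => E; move: (irr u); rewrite {2}E uv.
have G'sym : symmetric (adj_minus adj [set u; v]).
  by move=> x y; rewrite /adj_minus sym (andbC (x \notin _)).
pose Sa := comp adj u v a.
pose D1 := Sa :|: [set u; v].
pose D2 := ~: Sa.
have aSa : a \in Sa by apply: comp_in.
have bSa : b \notin Sa by rewrite inE.
have uS : u \in [set u; v] by rewrite !inE eqxx.
have vS : v \in [set u; v] by rewrite !inE eqxx orbT.
have uSa : u \notin Sa by apply/negP => /(comp_out aS); rewrite uS.
have vSa : v \notin Sa by apply/negP => /(comp_out aS); rewrite vS.
have P4_1 : forall p q, adj p q -> p \in D1 -> q \notin D1 -> p = u \/ p = v.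
  move=> p q pq; rewrite /D1 !(in_setU _ Sa) negb_or => /orP[pSa|pS] /andP[qSa qS].
    by move: qSa; rewrite (comp_step aS pSa pq qS).
  by move: pS; rewrite !inE => /orP[/eqP|/eqP]; auto.
have P4_2 : forall p q, adj p q -> p \in D2 -> q \notin D2 -> p = u \/ p = v.
  move=> p q pq; rewrite /D2 !in_setC negbK => pSa qSa.
  case: (boolP (p \in [set u; v])) => [|pS]; first by rewrite !inE => /orP[/eqP|/eqP]; auto.
  by move: pSa; rewrite (comp_step aS qSa _ pS) // sym.
have P3 : forall z, (z \in D1) || (z \in D2).
  by move=> z; rewrite /D1 /D2 (in_setU _ Sa) in_setC; case: (z \in Sa); rewrite ?orbT.
have P2 : forall z, z \in D1 -> z \in D2 -> z = u \/ z = v.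
  move=> z; rewrite /D1 /D2 in_setU in_setC => /orP[->//|]; rewrite !inE.
  by move=> /orP[/eqP|/eqP]; auto.
have uD1 : u \in D1 by rewrite /D1 in_setU uS orbT.
have vD1 : v \in D1 by rewrite /D1 in_setU vS orbT.
have uD2 : u \in D2 by rewrite /D2 in_setC.
have vD2 : v \in D2 by rewrite /D2 in_setC.
have bD1 : b \notin D1 by rewrite /D1 in_setU negb_or bSa.
have aD2 : a \notin D2 by rewrite /D2 in_setC negbK.
have Euv : [set u; v] = [set u; v] by [].
have Evu : [set v; u] = [set u; v] by rewrite setUC.
have vnu : v != u by rewrite eq_sym.
have P6 : forall c (D : {set T}), c \notin [set u; v] -> comp adj u v c \subset D -> u \in D -> v \in D ->
    connect (restr D (adje adj u v)) u v.
  move=> c D cS sD uD vD.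
  apply: (connect_trans _ (reach_end h2 cS sD vD Evu vnu)).
  apply: connect_symm; first by apply: restr_sym; exact: adje_sym.
  exact: (reach_end h2 cS sD uD Euv unv).
have P6_1 := P6 a D1 aS (subsetUl _ _) uD1 vD1.
have sb : comp adj u v b \subset D2.
  apply/subsetP => w; rewrite /D2 in_setC !inE => bw; apply/negP => aw.
  move: nab; rewrite (connect_trans aw _) //.
  by apply: connect_symm.
have P6_2 := P6 b D2 bS sb uD2 vD2.
have [F' [tF' cF' nF']] :=
  replace sym irr tF0 eF minF0 P4_1 P4_2 P3 uD1 uD2 vD1 vD2 P2 bD1 aD2 P6_1 P6_2.
exists F'; split => //; split => // F'' tF''; rewrite cF'; exact: minF0.
Qed.
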